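(* Let $p$ be a prime and $G$ a finite $p$-group whose commutator subgroup $G'$ is cyclic of order $p$ and contained in the centre $Z(G)$. Assume every non-linear irreducible character of $G$ is faithful. Then for every $x\in G\setminus Z(G)$ one has $\mathrm{nr}(x)\notin\mathbb{Z}_p[G]$.
   Context: $\mathrm{nr}$ denotes the reduced norm of the $\mathbb{Q}_p$-algebra $\mathbb{Q}_p[G]$, with values in $\zeta(\mathbb{Q}_p[G])\subseteq\mathbb{Q}_p[G]$. *)

(* Defs.v *)
From HB Require Import structures.
From mathcomp Require Import all_boot all_order all_algebra all_fingroup all_solvable all_field all_character.
Set Implicit Arguments. Unset Strict Implicit. Unset Printing Implicit Defensive.
Import Order.TTheory GRing.Theory Num.Theory.
Local Open Scope ring_scope.

(* Coefficient at g of the reduced norm nr(x) of x in Q_p[G] (equivalently in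
   Q[G], or in any splitting field of char 0), computed through the
   Wedderburn decomposition over an algebraically closed field:
     nr(x) = sum_{chi in Irr G} det(rho_chi(x)) e_chi,
     e_chi = chi(1)/|G| sum_g chi(g^-1) g.
   Here det(rho_chi(x)) is (cfDet chi) x. *)
Definition nr_coeff (gT : finGroupType) (G : {group gT}) (x g : gT) : algC :=
  (#|G|%:R)^-1 * \sum_(i : Iirr G) (cfDet 'chi_i) x * 'chi_i 1%g * 'chi_i (g^-1)%g.

(* z is a rational number lying in Z_p (i.e. in Z_(p) = Q ∩ Z_p). *)
Definition p_integral (p : nat) (z : algC) : Prop :=
  exists (a : int) (b : nat), ~~ (p %| b)%N /\ z = a%:~R / b%:R.

Definition nr_in_Zp_group_ring (p : nat) (gT : finGroupType) (G : {group gT}) (x : gT) : Prop :=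
  forall g, g \in G -> p_integral p (nr_coeff G x g).

(* Main.v *)
Require Import Defs.
From HB Require Import structures.
From mathcomp Require Import all_boot all_order all_algebra all_fingroup all_solvable all_field all_character.
Import Order.TTheory GRing.Theory Num.Theory.
Local Open Scope ring_scope.

Lemma irr_vanish (gT : finGroupType) (G : {group gT}) (i : Iirr G) x c :
  x \in G -> c \in ('Z('chi_i))%CF -> c \notin cfker 'chi_i ->
  'chi_i (x * c)%g = 'chi_i x -> 'chi_i x = 0.
Proof.
move=> Gx Zc nKc.
have Gc : c \in G := subsetP (cfcenter_sub _) c Zc.
rewrite -irrRepr in Zc nKc *.
rewrite cfcenter_repr in Zc; rewrite cfker_repr in nKc.
move: Zc; rewrite inE => /andP[_ /is_scalar_mxP[a Ea]].
rewrite !cfunE groupM // Gx /= !mulr1n repr_mxM // Ea mul_mx_scalar mxtraceZ.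
move=> E; apply/eqP; apply: contraR nKc => nz.
have a1 : a = 1.
  apply: (mulIf nz); by rewrite mul1r.
by apply/rkerP; split => //; rewrite Ea a1.
Qed.

Lemma not_p_integral_inv (p : nat) : prime p -> ~ p_integral p (p%:R)^-1.
Proof.
move=> pp [a [b [ndvd E]]].
have b0 : b != 0%N by apply: contraNneq ndvd => ->; rewrite dvdn0.
have p0 : (p%:R : algC) != 0 by rewrite pnatr_eq0 -lt0n prime_gt0.
have b0' : (b%:R : algC) != 0 by rewrite pnatr_eq0.
have E2 : (b%:R : algC) = p%:R * a%:~R.
  transitivity (p%:R * ((p%:R)^-1 * b%:R) : algC); first by rewrite mulrA mulfV // mul1r.
  by rewrite E -mulrA mulVf // mulr1.
have E3 : (b%:Z) = (p%:Z * a)%R.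
  by apply: (@intr_inj algC); rewrite rmorphM /=; exact E2.
move/negP: ndvd; apply; have := congr1 absz E3; rewrite abszM /= => ->.
exact: dvdn_mulr.
Qed.

Theorem lemma3p9 (p : nat) (gT : finGroupType) (G : {group gT}) :
  prime p -> (p.-group G)%g ->
  cyclic (G^`(1))%g -> #|G^`(1)%g| = p ->
  (G^`(1) \subset 'Z(G))%g ->
  (forall i : Iirr G, ~~ ('chi_i \is a linear_char) -> cfaithful 'chi_i) ->
  forall x : gT, x \in (G :\: 'Z(G))%g -> ~ nr_in_Zp_group_ring p G x.
Proof.
move=> pp _ _ cardG' G'Z ffl x /setDP[Gx nZx] H.
suff : p_integral p ((p%:R : algC)^-1) by move/(not_p_integral_inv _ pp).
have := H x Gx; congr p_integral.
have van : forall i : Iirr G, ~~ ('chi_i \is a linear_char) -> 'chi_i (x^-1)%g = 0.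
  move=> i nl.
  have nZxi : (x^-1)%g \notin 'Z(G)%g.
    by apply: contra nZx => /(groupVr) ; rewrite invgK.
  have Gxi : (x^-1)%g \in G by rewrite groupV.
  have [y Gy ncom] : exists2 y, y \in G & [~ x^-1, y]%g != 1%g.
    apply/exists_inP; apply: contraR nZxi => /exists_inP nE.
    apply/centerP; split => // y Gy; apply/commgP.
    by apply/negPn/negP => ne; apply: nE; exists y.
  have cG' : [~ x^-1, y]%g \in G^`(1)%g by rewrite mem_commg.
  have cZ : [~ x^-1, y]%g \in 'Z('chi_i)%CF.
    by rewrite cfcenter_fful_irr ?ffl // (subsetP G'Z).
  apply: (irr_vanish _ _ _ _ _ Gxi cZ).
    have := ffl i nl; rewrite /cfaithful => /subsetP sK.
    by apply: contra ncom => /sK; rewrite inE.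
  by rewrite -conjg_mulR cfunJ.
rewrite /nr_coeff (bigID (fun i : Iirr G => 'chi_i \is a linear_char)) /=.
rewrite [X in _ + X]big1 ?addr0; last first.
  by move=> i nl; rewrite van // mulr0.
rewrite (eq_bigr (fun _ => 1)); last first.
  move=> i lin; rewrite cfDet_id // lin_char1 // mulr1 lin_charV //.
  by rewrite mulfV // lin_char_neq0.
rewrite sumr_const card_lin_irr.
have sG : (G^`(1) \subset G)%g by apply: der_sub.
rewrite -(Lagrange sG) cardG' natrM invfM -mulrA mulVf ?mulr1 //.
by rewrite pnatr_eq0 -lt0n indexg_gt0.
Qed.
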